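(* Let $\mathfrak E=(\mathfrak e_1,\dots,\mathfrak e_n)$ be an admissible sequence of virtual extended $\mathbb Z$-segments such that $\mathrm{Supp}(\mathfrak e_1)\supseteq\mathrm{Supp}(\mathfrak e_2)\supseteq\cdots\supseteq\mathrm{Supp}(\mathfrak e_n)$. Then $\mathrm{NV}(\mathfrak E)\ne0$ if and only if $\widetilde{\mathrm{NV}}(\mathfrak E)\ne0$.
   Context: A $\mathbb Z$-segment is $[A,B]=\{A,\dots,B\}$ ($A\ge B$ integers), length $b=A-B+1$. A virtual extended $\mathbb Z$-segment is $([A,B],l,\eta)$, $l\in\mathbb Z$, $l\le b/2$, $\eta\in\{\pm1\}$ with $\eta\sim-\eta$ iff $b=2l$; extended if $l\ge0$; $\mathrm{Supp}=[A,B]$. A sequence with supports $[A_i,B_i]$ is admissible if $A_i<A_j$ and $B_i<B_j$ imply $i<j$. Pairwise non-vanishing: for admissible $(\mathfrak e_1,\mathfrak e_2)$, $\mathfrak e_i=([A_i,B_i],l_i,\eta_i)$, $b_i=A_i-B_i+1$, $\epsilon=(-1)^{A_1-B_1}\eta_1\eta_2$, $\mathrm{NV}(\mathfrak e_1,\mathfrak e_2)\ne0$ iff both are extended and all applicable conditions hold: (a) if $A_1\le A_2$, $B_1\le B_2$: $\epsilon=1\Rightarrow B_1+l_1\le B_2+l_2,\ A_1-l_1\le A_2-l_2$; $\epsilon=-1\Rightarrow A_1-l_1<B_2+l_2$; (b) if $A_1\le A_2$, $B_1\ge B_2$: $\epsilon=1\Rightarrow0\le l_2-l_1\le b_2-b_1$;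 $\epsilon=-1\Rightarrow l_1+l_2\ge b_1$; (c) if $A_1\ge A_2$, $B_1\le B_2$: $\epsilon=1\Rightarrow0\le l_1-l_2\le b_1-b_2$; $\epsilon=-1\Rightarrow l_1+l_2\ge b_2$. Row exchange $R(\mathfrak e_1,\mathfrak e_2)=(\mathfrak e_2',\mathfrak e_1')$ for nested supports, $\mathfrak e_i'=([A_i,B_i],l_i',\eta_i')$: Case 1, $[A_1,B_1]\subseteq[A_2,B_2]$: $(l_1',\eta_1')=(l_1,(-1)^{A_2-B_2}\eta_1)$; if $\epsilon=1$ and $b_2-2l_2<2(b_1-2l_1)$, $(l_2',\eta_2')=(b_2-l_2-(b_1-2l_1),(-1)^{A_1-B_1}\eta_2)$; if $\epsilon=1$ and $b_2-2l_2\ge2(b_1-2l_1)$, $(l_2',\eta_2')=(l_2+b_1-2l_1,(-1)^{A_1-B_1+1}\eta_2)$; if $\epsilon=-1$, $(l_2',\eta_2')=(l_2-(b_1-2l_1),(-1)^{A_1-B_1+1}\eta_2)$. Case 2, $[A_1,B_1]\supsetneq[A_2,B_2]$: $(l_2',\eta_2')=(l_2,(-1)^{A_1-B_1}\eta_2)$; if $\epsilon=1$ and $b_1-2l_1<2(b_2-2l_2)$, $(l_1',\eta_1')=(b_1-l_1-(b_2-2l_2),(-1)^{A_2-B_2}\eta_1)$; if $\epsilon=1$ and $b_1-2l_1\ge2(b_2-2l_2)$, $(l_1',\eta_1')=(l_1+b_2-2l_2,(-1)^{A_2-B_2+1}\eta_1)$; if $\epsilon=-1$, $(l_1',\eta_1')=(l_1-(b_2-2l_2),(-1)^{A_2-B_2+1}\eta_1)$.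 $R_k(\mathfrak E)$ replaces consecutive entries $(\mathfrak e_k,\mathfrak e_{k+1})$ with nested supports by $R(\mathfrak e_k,\mathfrak e_{k+1})$; $[\mathfrak E]$ is the set of sequences obtained from $\mathfrak E$ by finitely many $R_k$. $\widetilde{\mathrm{NV}}(\mathfrak E)\ne0$ means $\mathrm{NV}(\mathfrak e_i,\mathfrak e_{i+1})\ne0$ for all $1\le i\le n-1$; $\mathrm{NV}(\mathfrak E)\ne0$ means $\widetilde{\mathrm{NV}}(\mathfrak E')\ne0$ for all $\mathfrak E'\in[\mathfrak E]$. *)

(* Defs.v *)
From Stdlib Require Import ZArith List Lia Bool.
Open Scope Z_scope.
Import ListNotations.

(** A (representative of a) virtual extended Z-segment ([A,B], l, eta). *)
Record vseg := VSeg { sA : Z; sB : Z; sl : Z; seta : Z }.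

Definition blen (e : vseg) : Z := sA e - sB e + 1.

Definition sgn (k : Z) : Z := if Z.even k then 1 else -1.

Definition valid_vseg (e : vseg) : Prop :=
  sB e <= sA e /\ 2 * sl e <= blen e /\ (seta e = 1 \/ seta e = -1).

Definition extended (e : vseg) : Prop := 0 <= sl e.

Definition admissible (E : list vseg) : Prop :=
  forall i j d, (i < length E)%nat -> (j < length E)%nat ->
    sA (nth i E d) < sA (nth j E d) -> sB (nth i E d) < sB (nth j E d) ->
    (i < j)%nat.

Definition eps (e1 e2 : vseg) : Z := sgn (sA e1 - sB e1) * seta e1 * seta e2.

Definition NV2 (e1 e2 : vseg) : Prop :=
  let A1 := sA e1 in let B1 := sB e1 in let l1 := sl e1 in let b1 := blen e1 in
  let A2 := sA e2 in let B2 := sB e2 in let l2 := sl e2 in let b2 := blen e2 in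
  let ep := eps e1 e2 in
  extended e1 /\ extended e2 /\
  (A1 <= A2 -> B1 <= B2 ->
     (ep = 1 -> B1 + l1 <= B2 + l2 /\ A1 - l1 <= A2 - l2) /\
     (ep = -1 -> A1 - l1 < B2 + l2)) /\
  (A1 <= A2 -> B1 >= B2 ->
     (ep = 1 -> 0 <= l2 - l1 <= b2 - b1) /\
     (ep = -1 -> l1 + l2 >= b1)) /\
  (A1 >= A2 -> B1 <= B2 ->
     (ep = 1 -> 0 <= l1 - l2 <= b1 - b2) /\
     (ep = -1 -> l1 + l2 >= b2)).

Definition nested (e1 e2 : vseg) : Prop :=
  (sA e1 <= sA e2 /\ sB e2 <= sB e1) \/ (sA e2 <= sA e1 /\ sB e1 <= sB e2).

Definition row_exchange (e1 e2 : vseg) : vseg * vseg :=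
  let A1 := sA e1 in let B1 := sB e1 in let l1 := sl e1 in let b1 := blen e1 in
  let A2 := sA e2 in let B2 := sB e2 in let l2 := sl e2 in let b2 := blen e2 in
  let h1 := seta e1 in let h2 := seta e2 in
  let ep := eps e1 e2 in
  if (A1 <=? A2) && (B2 <=? B1) then
    let e1' := VSeg A1 B1 l1 (sgn (A2 - B2) * h1) in
    let e2' :=
      if ep =? 1 then
        if b2 - 2 * l2 <? 2 * (b1 - 2 * l1)
        then VSeg A2 B2 (b2 - l2 - (b1 - 2 * l1)) (sgn (A1 - B1) * h2)
        else VSeg A2 B2 (l2 + b1 - 2 * l1) (sgn (A1 - B1 + 1) * h2)
      else VSeg A2 B2 (l2 - (b1 - 2 * l1)) (sgn (A1 - B1 + 1) * h2) in
    (e2', e1')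
  else
    (* Case 2: [A1,B1] strictly contains [A2,B2] *)
    let e2' := VSeg A2 B2 l2 (sgn (A1 - B1) * h2) in
    let e1' :=
      if ep =? 1 then
        if b1 - 2 * l1 <? 2 * (b2 - 2 * l2)
        then VSeg A1 B1 (b1 - l1 - (b2 - 2 * l2)) (sgn (A2 - B2) * h1)
        else VSeg A1 B1 (l1 + b2 - 2 * l2) (sgn (A2 - B2 + 1) * h1)
      else VSeg A1 B1 (l1 - (b2 - 2 * l2)) (sgn (A2 - B2 + 1) * h1) in
    (e2', e1').

Inductive Rstep : list vseg -> list vseg -> Prop :=
| Rstep_intro : forall pre e1 e2 post,
    nested e1 e2 ->
    Rstep (pre ++ e1 :: e2 :: post)
          (pre ++ fst (row_exchange e1 e2) :: snd (row_exchange e1 e2) :: post).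

Inductive in_class (E : list vseg) : list vseg -> Prop :=
| in_class_refl : in_class E E
| in_class_step : forall E' E'', in_class E E' -> Rstep E' E'' -> in_class E E''.

Fixpoint NVtilde (E : list vseg) : Prop :=
  match E with
  | e1 :: ((e2 :: _) as t) => NV2 e1 e2 /\ NVtilde t
  | _ => True
  end.

Definition NV (E : list vseg) : Prop := forall E', in_class E E' -> NVtilde E'.

Definition supp_sup (e1 e2 : vseg) : Prop := sA e2 <= sA e1 /\ sB e1 <= sB e2.

Fixpoint supp_decreasing (E : list vseg) : Prop :=
  match E with
  | e1 :: ((e2 :: _) as t) => supp_sup e1 e2 /\ supp_decreasing t
  | _ => True
  end.

(* Main.v *)
Require Import Defs.
From Stdlib Require Import ZArith List Lia Bool.
Open Scope Z_scope.
Import ListNotations.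
Record xe := XE { xA : Z; xB : Z; xx : Z }.
Definition xb (p : xe) := xA p - xB p + 1.
Definition nestedx (p q : xe) : Prop :=
  (xA p <= xA q /\ xB q <= xB p) \/ (xA q <= xA p /\ xB p <= xB q).
Definition P (p q : xe) : Prop :=
  nestedx p q /\ Z.abs (xx p - xx q) <= Z.abs (xb p - xb q) /\
  Z.abs (xx p) <= xb p /\ Z.abs (xx q) <= xb q.
Definition xrx (p q : xe) : xe * xe :=
  if (xA p <=? xA q) && (xB q <=? xB p)
  then (XE (xA q) (xB q) (2 * xx p - xx q), p)
  else (q, XE (xA p) (xB p) (2 * xx q - xx p)).
Definition mvR p q := snd (xrx p q).
Ltac dleb := repeat (match goal with |- context [?a <=? ?b] => destruct (Z.leb_spec a b) end; cbn [andb fst snd xA xB xx]; try (exfalso; lia)).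
Ltac dlebH := repeat (match goal with H : context [?a <=? ?b] |- _ => revert H end);
   dleb; intros.
Ltac habs := repeat match goal with
  | H : Z.abs _ <= _ |- _ => apply Z.abs_le in H
  | H : context [Z.abs ?t] |- _ => destruct (Z.abs_spec t) as [[? ?Ha]|[? ?Ha]]; rewrite Ha in *; clear Ha; try (exfalso; lia)
  end.
Ltac gabs := repeat match goal with
  | |- Z.abs _ <= _ => apply Z.abs_le
  | |- context [Z.abs ?t] => destruct (Z.abs_spec t) as [[? ?Ha]|[? ?Ha]]; rewrite Ha in *; clear Ha; try (exfalso; lia)
  end.
Ltac fin := repeat split; gabs; try lia; try (f_equal; lia).
Lemma sgn_pm k : sgn k = 1 \/ sgn k = -1.
Proof. unfold sgn; destruct (Z.even k); auto. Qed.
Lemma sgn_succ k : sgn (k + 1) = - sgn k.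
Proof. unfold sgn; rewrite Z.even_add; destruct (Z.even k); reflexivity. Qed.
Definition toX (t : Z) (e : vseg) : xe := XE (sA e) (sB e) (t * seta e * (blen e - 2 * sl e)).
Definition tnext (t : Z) (e : vseg) : Z := t * sgn (sA e - sB e).

Lemma NV2_iff t e1 e2 : valid_vseg e1 -> valid_vseg e2 -> nested e1 e2 -> (t = 1 \/ t = -1) ->
  (NV2 e1 e2 <-> P (toX t e1) (toX (tnext t e1) e2)).
Proof.
  destruct e1 as [A1 B1 l1 h1], e2 as [A2 B2 l2 h2].
  unfold valid_vseg, NV2, P, toX, tnext, nested, nestedx, eps, extended, xb, blen; cbn [sA sB sl seta xA xB xx].
  intros (? & ? & [-> | ->]) (? & ? & [-> | ->]) Hn [-> | ->];
  destruct (sgn_pm (A1 - B1)) as [-> | ->]; lia.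
Qed.

Ltac dall := repeat (match goal with
  | |- context [?a <=? ?b] => destruct (Z.leb_spec a b)
  | |- context [?a =? ?b] => destruct (Z.eqb_spec a b)
  | |- context [?a <? ?b] => destruct (Z.ltb_spec a b)
  end; cbn [andb fst snd xA xB xx sA sB sl seta]; try (exfalso; lia)).

Lemma rx_x t e1 e2 : valid_vseg e1 -> valid_vseg e2 -> nested e1 e2 -> (t = 1 \/ t = -1) ->
  toX t (fst (row_exchange e1 e2)) = fst (xrx (toX t e1) (toX (tnext t e1) e2)) /\
  toX (tnext t (fst (row_exchange e1 e2))) (snd (row_exchange e1 e2)) =
     snd (xrx (toX t e1) (toX (tnext t e1) e2)) /\
  valid_vseg (fst (row_exchange e1 e2)) /\ valid_vseg (snd (row_exchange e1 e2)) /\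
  tnext (tnext t (fst (row_exchange e1 e2))) (snd (row_exchange e1 e2)) = tnext (tnext t e1) e2.
Proof.
  destruct e1 as [A1 B1 l1 h1], e2 as [A2 B2 l2 h2].
  unfold valid_vseg, row_exchange, xrx, toX, tnext, nested, eps, blen; cbv zeta;
  cbn [sA sB sl seta xA xB xx fst snd].
  rewrite ?sgn_succ.
  intros (? & ? & [-> | ->]) (? & ? & [-> | ->]) Hn [-> | ->];
  destruct (sgn_pm (A1 - B1)) as [Hs1 | Hs1]; destruct (sgn_pm (A2 - B2)) as [Hs2 | Hs2];
  rewrite ?Hs1, ?Hs2; dall; rewrite ?Hs1, ?Hs2;
  (split; [try (f_equal; lia) | split; [try (f_equal; lia) | lia]]).
Qed.

Lemma K2 a b : P a b -> P (fst (xrx a b)) (snd (xrx a b)) /\ mvR (fst (xrx a b)) (snd (xrx a b)) = b.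
Proof.
  destruct a as [a1 a2 a3], b as [b1 b2 b3].
  unfold P, mvR, xrx, nestedx, xb; cbn [andb fst snd xA xB xx].
  intros [[[? ?]|[? ?]] [? [? ?]]]; dleb; (split; [repeat split; try lia| try (f_equal; lia)]).
Qed.


Definition ins (p q : xe) : Prop := xA p <= xA q /\ xB q <= xB p.
Lemma ins_dec p q : {ins p q} + {~ ins p q}.
Proof. unfold ins; destruct (Z_le_dec (xA p) (xA q)), (Z_le_dec (xB q) (xB p)); [left; auto| right; lia..]. Qed.
Lemma xrx_in p q : ins p q -> xrx p q = (XE (xA q) (xB q) (2 * xx p - xx q), p).
Proof. unfold ins, xrx; intros [H1 H2]. apply Z.leb_le in H1; apply Z.leb_le in H2. rewrite H1, H2; reflexivity. Qed.
Lemma xrx_out p q : ~ ins p q -> xrx p q = (q, XE (xA p) (xB p) (2 * xx q - xx p)).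
Proof. unfold ins, xrx; intros H. destruct (xA p <=? xA q) eqn:E1, (xB q <=? xB p) eqn:E2; try reflexivity.
  apply Z.leb_le in E1; apply Z.leb_le in E2. tauto. Qed.
Ltac rxs := repeat (match goal with
 | |- context [xrx ?p ?q] => let H := fresh in destruct (ins_dec p q) as [H|H];
     [rewrite (xrx_in p q H) | rewrite (xrx_out p q H)]
 end; cbn [fst snd xA xB xx]; try (exfalso; unfold ins in *; cbn [xA xB xx] in *; lia)).

Lemma K1 p a b : P p a -> P (mvR p a) b -> P a b ->
  P p (fst (xrx a b)) /\ P (mvR p (fst (xrx a b))) (snd (xrx a b)) /\
  mvR (mvR p (fst (xrx a b))) (snd (xrx a b)) = mvR (mvR p a) b.
Proof.
  destruct p as [p1 p2 p3], a as [a1 a2 a3], b as [b1 b2 b3].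
  unfold mvR. rxs. 
  all: unfold P, nestedx, xb, ins in *; cbn [xA xB xx] in *.
  all: intros [[[? ?]|[? ?]] [? [? ?]]] Hmid [[[? ?]|[? ?]] [? [? ?]]]; habs;
  destruct Hmid as [[[? ?]|[? ?]] [? [? ?]]]; habs; fin.
Qed.
Lemma K0 p a b : xA a <= xA p -> xB p <= xB a -> xA b <= xA a -> xB a <= xB b ->
  P p a -> P a b -> P (mvR p a) b.
Proof.
  destruct p as [p1 p2 p3], a as [a1 a2 a3], b as [b1 b2 b3].
  unfold P, mvR, xrx, nestedx, xb; cbn [andb fst snd xA xB xx].
  intros ? ? ? ? [_ [? [? ?]]] [_ [? [? ?]]]; habs; dleb; fin.
Qed.

Fixpoint Pall (p : xe) (l : list xe) : Prop :=
  match l with [] => True | q :: r => P p q /\ Pall (mvR p q) r end.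
Fixpoint Good (l : list xe) : Prop :=
  match l with [] => True | p :: r => Pall p r /\ Good r end.
Fixpoint mvs p l := match l with [] => p | q :: r => mvs (mvR p q) r end.

Lemma Pall_app p l1 l2 : Pall p (l1 ++ l2) <-> Pall p l1 /\ Pall (mvs p l1) l2.
Proof.
  revert p; induction l1 as [|q r IH]; intros p; simpl.
  - tauto.
  - rewrite IH; tauto.
Qed.

Lemma Pall_swap q a b post : P a b -> Pall q (a :: b :: post) ->
  Pall q (fst (xrx a b) :: snd (xrx a b) :: post).
Proof.
  simpl. intros Hab [H1 [H2 H3]].
  destruct (K1 q a b H1 H2 Hab) as [G1 [G2 G3]]. rewrite G3. tauto.
Qed.

Lemma Good_swap pre a b post : P a b -> Good (pre ++ a :: b :: post) ->
  Good (pre ++ fst (xrx a b) :: snd (xrx a b) :: post).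
Proof.
  intros Hab; induction pre as [|x pre IH]; simpl.
  - intros [[H1 H2] [H3 H4]]. destruct (K2 a b Hab) as [G1 G2].
    split; [split; [exact G1 | rewrite G2; exact H3] | split; [exact H2 | exact H4]].
  - intros [H1 H2]. split; [| exact (IH H2)].
    apply Pall_app in H1. apply Pall_app. destruct H1 as [H1a H1b].
    split; [exact H1a | apply Pall_swap; assumption].
Qed.

Lemma Good_app_r l1 l2 : Good (l1 ++ l2) -> Good l2.
Proof. induction l1; simpl; tauto. Qed.

Fixpoint tfold t (l : list vseg) := match l with [] => t | e :: r => tfold (tnext t e) r end.
Fixpoint xs t (l : list vseg) : list xe :=
  match l with [] => [] | e :: r => toX t e :: xs (tnext t e) r end.

Lemma xs_app t l1 l2 : xs t (l1 ++ l2) = xs t l1 ++ xs (tfold t l1) l2.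
Proof. revert t; induction l1; intros t; simpl; [reflexivity| rewrite IHl1; reflexivity]. Qed.

Lemma tnext_pm t e : (t = 1 \/ t = -1) -> (tnext t e = 1 \/ tnext t e = -1).
Proof. unfold tnext; intros [-> | ->]; destruct (sgn_pm (sA e - sB e)) as [-> | ->]; lia. Qed.

Lemma tfold_pm t l : (t = 1 \/ t = -1) -> (tfold t l = 1 \/ tfold t l = -1).
Proof. revert t; induction l; intros t Ht; simpl; [exact Ht| apply IHl, tnext_pm, Ht]. Qed.

Lemma step_inv F F' t : Rstep F F' -> Forall valid_vseg F -> (t = 1 \/ t = -1) ->
  Good (xs t F) -> Forall valid_vseg F' /\ Good (xs t F').
Proof.
  intros [pre e1 e2 post Hn] HV Ht HG.
  apply Forall_app in HV. destruct HV as [HVp HV]. inversion HV as [|? ? Hv1 HV2]; subst.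
  inversion HV2 as [|? ? Hv2 HVpost]; subst.
  pose proof (tfold_pm t pre Ht) as Ht'.
  destruct (rx_x (tfold t pre) e1 e2 Hv1 Hv2 Hn Ht') as (E1 & E2 & V1 & V2 & E3).
  split.
  - apply Forall_app; split; [exact HVp|]. constructor; [exact V1|constructor; [exact V2|exact HVpost]].
  - rewrite xs_app in *. simpl in *. rewrite E1, E2, E3.
    apply Good_swap; [| exact HG].
    apply Good_app_r in HG. simpl in HG. tauto.
Qed.

Lemma class_inv E F : in_class E F -> Forall valid_vseg E -> Good (xs 1 E) ->
  Forall valid_vseg F /\ Good (xs 1 F).
Proof.
  induction 1 as [|E' E'' _ IH Hs]; intros HV HG.
  - tauto.
  - destruct (IH HV HG) as [HV' HG']. apply (step_inv E' E'' 1 Hs HV'); auto.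
Qed.

Lemma Good_NVt F : forall t, (t = 1 \/ t = -1) -> Forall valid_vseg F -> Good (xs t F) -> NVtilde F.
Proof.
  induction F as [|e1 r IH]; intros t Ht HV HG; [exact I|].
  destruct r as [|e2 r]; [exact I|].
  inversion HV as [|? ? Hv1 HV2]; subst. inversion HV2 as [|? ? Hv2 _]; subst.
  simpl in HG. destruct HG as [[HP _] HG].
  change (NV2 e1 e2 /\ NVtilde (e2 :: r)). split.
  - apply (proj2 (NV2_iff t e1 e2 Hv1 Hv2 (proj1 HP) Ht)). exact HP.
  - apply (IH (tnext t e1)); [apply tnext_pm, Ht | exact HV2 | exact HG].
Qed.

Lemma mv_supp p q : xA (mvR p q) = xA p /\ xB (mvR p q) = xB p.
Proof. unfold mvR, xrx. destruct (_ && _); simpl; auto. Qed.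

Lemma chain_Pall E : forall t p, Forall valid_vseg E -> supp_decreasing E -> NVtilde E ->
  (t = 1 \/ t = -1) ->
  (match E with [] => True | e :: _ =>
     sA e <= xA p /\ xB p <= sB e /\ P p (toX t e) end) ->
  Pall p (xs t E).
Proof.
  induction E as [|e r IH]; intros t p HV HD HN Ht Hp; [exact I|].
  destruct Hp as (Ha & Hb & HP).
  simpl. split; [exact HP|].
  inversion HV as [|? ? Hv1 HV2]; subst.
  apply IH; [exact HV2 | | | apply tnext_pm, Ht |].
  - destruct r; [exact I| exact (proj2 HD)].
  - destruct r; [exact I| exact (proj2 HN)].
  - destruct r as [|e2 r]; [exact I|].
    inversion HV2 as [|? ? Hv2 _]; subst.
    destruct HD as [[Hs1 Hs2] _]. destruct HN as [HN _].
    destruct (mv_supp p (toX t e)) as [-> ->].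
    assert (HP2 : P (toX t e) (toX (tnext t e) e2)).
    { apply (proj1 (NV2_iff t e e2 Hv1 Hv2 ltac:(unfold nested; lia) Ht)). exact HN. }
    split; [lia|]. split; [lia|].
    apply K0; [exact Ha | exact Hb | exact Hs1 | exact Hs2 | exact HP | exact HP2].
Qed.

Lemma chain_Good E : forall t, Forall valid_vseg E -> supp_decreasing E -> NVtilde E ->
  (t = 1 \/ t = -1) -> Good (xs t E).
Proof.
  induction E as [|e r IH]; intros t HV HD HN Ht; [exact I|].
  inversion HV as [|? ? Hv1 HV2]; subst.
  simpl. split.
  - apply chain_Pall; [exact HV2 | | | apply tnext_pm, Ht |].
    + destruct r; [exact I| exact (proj2 HD)].
    + destruct r; [exact I| exact (proj2 HN)].
    + destruct r as [|e2 r]; [exact I|].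
      inversion HV2 as [|? ? Hv2 _]; subst.
      destruct HD as [[Hs1 Hs2] _]. destruct HN as [HN _].
      simpl. split; [lia|]. split; [lia|].
      apply (proj1 (NV2_iff t e e2 Hv1 Hv2 ltac:(unfold nested; lia) Ht)). exact HN.
  - apply IH; [exact HV2 | | | apply tnext_pm, Ht].
    + destruct r; [exact I| exact (proj2 HD)].
    + destruct r; [exact I| exact (proj2 HN)].
Qed.

Theorem theorem4p15 (E : list vseg) :
  Forall valid_vseg E ->
  admissible E ->
  supp_decreasing E ->
  (NV E <-> NVtilde E).
Proof.
  intros HV _ HD. split.
  - intros H. apply H. constructor.
  - intros HN F HF.
    destruct (class_inv E F HF HV (chain_Good E 1 HV HD HN ltac:(lia))) as [HVF HGF].
    exact (Good_NVt F 1 ltac:(lia) HVF HGF).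
Qed.
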